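(* Let $\mathfrak g$ be of type $A_n$ with $n\ge 2$ and let $r=\frac{n+1}{\gcd(n+1,2)}$. Then the cardinality of $\Psi_{\min}$ equals the number of minimal $n$-sequences of type $r$.
   Context: For $\mathfrak g$ of type $A_n$ with fundamental weights $\lambda_1,\dots,\lambda_n$ (labelled along the Dynkin diagram $1-2-\cdots-n$), root lattice $Q$ and dominant weights $\Lambda^+=\bigoplus_i\mathbb N\lambda_i$, let $\Psi=\{\lambda\in\Lambda^+: 2\lambda\in Q\}$ and $\Psi_{\min}=\{\lambda\in\Psi\setminus\{0\}:\lambda\ne\mu_1+\mu_2\text{ for all }\mu_1,\mu_2\in\Psi\setminus\{0\}\}$. An $n$-sequence is an $n$-tuple $\mathbf t=(t_1,\dots,t_n)$ of nonnegative integers; set $|\mathbf t|=t_1+2t_2+\cdots+nt_n$. For $k\in\mathbb Z_{>0}$, $\mathbf t$ is of type $k$ if $k\mid|\mathbf t|$, and an $n$-sequence of type $k$ is minimal if $\mathbf t\neq(0,\dots,0)$ and $\mathbf t$ is not the (componentwise) sum of two nonzero $n$-sequences of type $k$. *)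

(* Defs.v *)
From mathcomp Require Import all_boot all_order all_algebra.
Set Implicit Arguments. Unset Strict Implicit. Unset Printing Implicit Defensive.
Import GRing.Theory Num.Theory.

(* Type A_n.  A weight sum_i m_i lambda_i is encoded by its coordinates in
   the basis of fundamental weights; index i : 'I_n stands for lambda_(i+1). *)

(* Cartan matrix of A_n: the simple root alpha_j has lambda-coordinates
   (cartanA i j)_i, i.e. alpha_j = 2 lambda_j - lambda_(j-1) - lambda_(j+1). *)
Definition cartanA (n : nat) (i j : 'I_n) : int :=
  if i == j then Posz 2
  else if (i.+1 == j :> nat) || (j.+1 == i :> nat) then Negz 0 else Posz 0.

Definition in_root_lattice (n : nat) (v : 'I_n -> int) : Prop :=
  exists c : 'I_n -> int, forall i : 'I_n, v i = (\sum_(j < n) c j * cartanA i j)%R.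

(* dominant weights: n-tuples of naturals (coefficients of lambda_1..lambda_n) *)
Definition is_zero_tuple (n : nat) (t : n.-tuple nat) : Prop :=
  forall i : 'I_n, tnth t i = 0%N.

Definition tuple_sum (n : nat) (t u v : n.-tuple nat) : Prop :=
  forall i : 'I_n, tnth t i = (tnth u i + tnth v i)%N.

Definition inPsi (n : nat) (t : n.-tuple nat) : Prop :=
  in_root_lattice (fun i : 'I_n => Posz (2 * tnth t i)%N).

Definition inPsi_min (n : nat) (t : n.-tuple nat) : Prop :=
  inPsi t /\ ~ is_zero_tuple t /\
  ~ (exists u v : n.-tuple nat,
        inPsi u /\ ~ is_zero_tuple u /\ inPsi v /\ ~ is_zero_tuple v /\
        tuple_sum t u v).

Definition seq_weight (n : nat) (t : n.-tuple nat) : nat :=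
  \sum_(i < n) (i.+1 * tnth t i)%N.

Definition of_type (n k : nat) (t : n.-tuple nat) : Prop :=
  (k %| seq_weight t)%N.

Definition minimal_of_type (n k : nat) (t : n.-tuple nat) : Prop :=
  of_type k t /\ ~ is_zero_tuple t /\
  ~ (exists u v : n.-tuple nat,
        of_type k u /\ ~ is_zero_tuple u /\ of_type k v /\ ~ is_zero_tuple v /\
        tuple_sum t u v).

(* Main.v *)
Require Import Defs.
From mathcomp Require Import all_boot all_order all_algebra zify ring.
From Stdlib Require Import ClassicalEpsilon.
Set Implicit Arguments. Unset Strict Implicit.
Import GRing.Theory Num.Theory.
Definition pb (P : Prop) : bool := if excluded_middle_informative P then true else false.
Lemma pbP P : pb P <-> P.
Proof. rewrite /pb; case: excluded_middle_informative => //. Qed.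

Lemma weight_sum n (t u v : n.-tuple nat) : tuple_sum t u v -> seq_weight t = seq_weight u + seq_weight v.
Proof. move=> h; rewrite /seq_weight -big_split /=; apply: eq_bigr => i _; by rewrite h mulnDr. Qed.

Lemma min_bound n r (t : n.-tuple nat) : 0 < r -> minimal_of_type r t -> forall i, tnth t i <= r.
Proof.
move=> r0 [ht [hnz hmin]] i; rewrite leqNgt; apply/negP => hi; apply: hmin.
exists [tuple (if j == i then r else 0) | j < n], [tuple tnth t j - (if j == i then r else 0) | j < n].
have hs : tuple_sum t [tuple (if j == i then r else 0) | j < n] [tuple tnth t j - (if j == i then r else 0) | j < n].
  move=> j; rewrite !tnth_mktuple; case: eqP => [->|_]; lia.
have hu : of_type r [tuple (if j == i then r else 0) | j < n].
  rewrite /of_type /seq_weight (bigD1 i) //= tnth_mktuple eqxx big1 ?addn0 ?dvdn_mull //.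
  by move=> j /negbTE hj; rewrite tnth_mktuple hj muln0.
split => //; split.
  by move/(_ i); rewrite tnth_mktuple eqxx; lia.
split.
  by rewrite /of_type -(dvdn_addr _ hu) -(weight_sum hs).
split => //.
by move/(_ i); rewrite tnth_mktuple eqxx; lia.
Qed.

Lemma enum_min n r (P : n.-tuple nat -> Prop) :
  (forall t, P t -> forall i, tnth t i <= r) ->
  exists s : seq (n.-tuple nat), uniq s /\ forall t, t \in s <-> P t.
Proof.
move=> hb.
exists (filter (fun t => pb (P t)) [seq map_tuple (@nat_of_ord r.+1) x | x <- enum {: n.-tuple 'I_r.+1}]).
split.
  rewrite filter_uniq // map_inj_uniq ?enum_uniq //.
  move=> x y /(congr1 val) /= /(inj_map val_inj) e; exact: val_inj.
move=> t; rewrite mem_filter; split.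
  by case/andP => /pbP.
move=> Pt; apply/andP; split; first exact/pbP.
apply/mapP; exists (map_tuple (fun a => inord a : 'I_r.+1) t); first by rewrite mem_enum.
apply: eq_from_tnth => i; rewrite !tnth_map inordK //; exact: hb.
Qed.

Lemma rdiv (m w : nat) : 0 < m -> (m %| 2 * w) = (m %/ gcdn m 2 %| w).
Proof.
move=> m0.
rewrite -gcdn_modl modn2.
case o: (odd m) => /=.
  rewrite (_ : gcdn 1 2 = 1) // divn1 Gauss_dvdr //.
  by rewrite /coprime -gcdn_modl modn2 o.
rewrite (_ : gcdn 0 2 = 2) //.
have e : m = 2 * (m %/ 2) by rewrite mulnC divnK // dvdn2 o.
by rewrite {1}e dvdn_pmul2l.
Qed.

Local Open Scope ring_scope.
Definition fv n (k : nat) : 'I_n -> int := fun i => Posz ((i : nat) == k)%N.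
Arguments fv : clear implicits.
Lemma alpha_S n (k : 'I_n) (j:nat) (hk : val k = j.+1) i :
  cartanA i k = 2%:Z * fv n j.+1 i - fv n j i - fv n j.+2 i.
Proof.
rewrite /cartanA /fv -(inj_eq val_inj) /= hk.
move: (val i) => x.
rewrite eqSS (eq_sym j.+2).
case: (x =P j.+1) => h1; case: (x =P j) => h2; case: (x =P j.+2) => h3 /=; lia.
Qed.
Lemma alpha_0 n (k : 'I_n) (hk : val k = 0%N) i :
  cartanA i k = 2%:Z * fv n 0 i - fv n 1 i.
Proof.
rewrite /cartanA /fv -(inj_eq val_inj) /= hk.
move: (val i) => x.
rewrite (eq_sym 1%N).
case: (x =P 0%N) => h1; case: (x =P 1%N) => h2 /=; lia.
Qed.

Lemma L_ext n (v w : 'I_n -> int) : (forall i, v i = w i) -> in_root_lattice v -> in_root_lattice w.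
Proof. move=> e [c hc]; exists c => i; by rewrite -e hc. Qed.
Lemma L_add n (v w : 'I_n -> int) : in_root_lattice v -> in_root_lattice w ->
  in_root_lattice (fun i => v i + w i).
Proof.
move=> [c hc] [d hd]; exists (fun j => c j + d j) => i.
by rewrite hc hd -big_split /=; apply: eq_bigr => j _; rewrite mulrDl.
Qed.
Lemma L_scale n (v : 'I_n -> int) z : in_root_lattice v ->
  in_root_lattice (fun i => z * v i).
Proof.
move=> [c hc]; exists (fun j => z * c j) => i.
by rewrite hc mulr_sumr; apply: eq_bigr => j _; rewrite mulrA.
Qed.
Lemma L_alpha n (k : 'I_n) : in_root_lattice (fun i => cartanA i k).
Proof.
exists (fun j => Posz (j == k)) => i.
rewrite (bigD1 k) //= eqxx mul1r big1 ?addr0 // => j /negbTE ->; by rewrite mul0r.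
Qed.
Lemma L_zero n : in_root_lattice (fun _ : 'I_n => 0).
Proof. exists (fun _ => 0) => i; rewrite big1 // => j _; by rewrite mul0r. Qed.

Definition gg n (k : nat) : 'I_n -> int := fun i => fv n k i - (k.+1)%:Z * fv n 0 i.
Arguments gg : clear implicits.

Lemma gg_L2 n k : (k < n)%N -> in_root_lattice (gg n k) /\ in_root_lattice (gg n k.+1).
Proof.
elim: k => [|k IH] hk.
  split.
    apply: (L_ext _ (@L_zero n)) => i; rewrite /gg; ring.
  apply: (L_ext _ (L_scale (-1) (L_alpha (Ordinal hk)))) => i.
  rewrite (alpha_0 (k := Ordinal hk)) // /gg; ring.
have [_ h2] := IH (ltnW hk).
have [h1 _] := IH (ltnW hk).
split => //.
have hk1 : (k.+1 < n)%N by lia.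
apply: (L_ext _ (L_add (L_add (L_scale 2 h2) (L_scale (-1) h1)) (L_scale (-1) (L_alpha (Ordinal hk1))))).
move=> i; rewrite (alpha_S (k := Ordinal hk1) (j := k)) // /gg.
rewrite !natz. ring.
Qed.

Lemma L_lin n (g : 'I_n -> 'I_n -> int) (a : 'I_n -> int) :
  (forall k, in_root_lattice (g k)) -> in_root_lattice (fun i => \sum_k a k * g k i).
Proof.
move=> h; have [cs hcs] := fin_all_exists h.
exists (fun j => \sum_k a k * cs k j) => i.
under eq_bigr => k _ do rewrite hcs mulr_sumr.
rewrite exchange_big /=; apply: eq_bigr => j _.
by rewrite mulr_suml; apply: eq_bigr => k _; rewrite mulrA.
Qed.

Lemma S_fv n k : \sum_(i < n) (i.+1)%:Z * fv n k i = if (k < n)%N then (k.+1)%:Z else 0.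
Proof.
case: ifP => hk.
  rewrite (bigD1 (Ordinal hk)) //= /fv /= eqxx mulr1 big1 ?addr0 // => j hj.
  have -> : (nat_of_ord j == k) = false.
    apply/negP => /eqP e0; case/eqP: hj; apply/val_inj => /=; exact: e0.
  by rewrite mulr0.
rewrite big1 // => j _; rewrite /fv.
have -> : (nat_of_ord j == k) = false.
  apply/negP => /eqP e; by move: (ltn_ord j); rewrite e hk.
by rewrite mulr0.
Qed.

Lemma sum3 n (F : 'I_n -> int) (x y z : int) a b c :
  \sum_i F i * (x * fv n a i + y * fv n b i + z * fv n c i) =
  x * \sum_i F i * fv n a i + y * \sum_i F i * fv n b i + z * \sum_i F i * fv n c i.
Proof.
rewrite !mulr_sumr -!big_split /=; apply: eq_bigr => i _; ring.
Qed.

Lemma alpha_0' n (k : 'I_n) (hk : val k = 0%N) i :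
  cartanA i k = 2 * fv n 0 i + (-1) * fv n 1 i + 0 * fv n 0 i.
Proof. rewrite (alpha_0 hk); ring. Qed.
Lemma alpha_S' n (k : 'I_n) (j:nat) (hk : val k = j.+1) i :
  cartanA i k = 2 * fv n j.+1 i + (-1) * fv n j i + (-1) * fv n j.+2 i.
Proof. rewrite (alpha_S hk); ring. Qed.

Lemma col_sum n (hn : (2 <= n)%N) (j : 'I_n) :
  \sum_(i < n) (i.+1)%:Z * cartanA i j = if (val j == n.-1) then (n.+1)%:Z else 0.
Proof.
case ej: (val j) => [|m].
  under eq_bigr => i _ do rewrite (alpha_0' ej).
  rewrite sum3 !S_fv ifT; last lia. rewrite ifT; last lia.
  rewrite ifN; last by apply/eqP; lia.
  rewrite !natz; lia.
under eq_bigr => i _ do rewrite (alpha_S' ej).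
have hj := ltn_ord j; rewrite ej in hj.
rewrite sum3 !S_fv hj ifT; last lia.
case: ifP => h2; case: ifP => /eqP h3; rewrite ?natz; lia.
Qed.

Lemma wsumZ n (t : n.-tuple nat) :
  \sum_(i < n) (i.+1)%:Z * Posz (2 * tnth t i)%N = Posz (2 * seq_weight t)%N.
Proof.
rewrite /seq_weight big_distrr /= -natz natr_sum; apply: eq_bigr => i _.
rewrite -!natz -natrM; congr (_%:R); lia.
Qed.

Lemma inPsi_dvd n (hn : (2 <= n)%N) (t : n.-tuple nat) :
  inPsi t <-> (n.+1 %| 2 * seq_weight t)%N.
Proof.
split.
  move=> [c hc].
  have hl : (n.-1 < n)%N by lia.
  have e : Posz (2 * seq_weight t)%N = c (Ordinal hl) * (n.+1)%:Z.
    rewrite -wsumZ.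
    under eq_bigr => i _ do rewrite hc mulr_sumr.
    rewrite exchange_big /=.
    have colc j : \sum_(i < n) (i.+1)%:Z * (c j * cartanA i j) = c j * (if (val j == n.-1) then (n.+1)%:Z else 0).
      rewrite -col_sum // mulr_sumr; apply: eq_bigr => i _; ring.
    under eq_bigr => j _ do rewrite colc.
    rewrite (bigD1 (Ordinal hl)) //= eqxx big1 ?addr0 // => j hj.
    rewrite ifN ?mulr0 //; apply: contra hj => /eqP e; apply/eqP/val_inj; exact: e.
  suff : ((n.+1)%:Z %| Posz (2 * seq_weight t)%N)%Z by [].
  by rewrite e dvdz_mull.
case/dvdnP => q hq.
have hl : (n.-1 < n)%N by lia.
have h0 : (0 < n)%N by lia.
have [_ Hn] := gg_L2 hl.
rewrite prednK // in Hn.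
apply: (L_ext _ (L_add (L_lin (fun k => Posz (2 * tnth t k)%N) (fun k => (gg_L2 (ltn_ord k)).1)) (L_scale (- q%:Z) Hn))) => i.
rewrite /gg.
under eq_bigr => k _ do rewrite mulrBr.
rewrite sumrB.
rewrite (bigD1 i) //= /fv eqxx mulr1 big1 ?addr0; last first.
  move=> k hk; have -> : (nat_of_ord i == nat_of_ord k) = false.
    apply/negP => /eqP e0; case/eqP: hk; apply/val_inj => /=; by rewrite e0.
  by rewrite mulr0.
have -> : (nat_of_ord i == n) = false by apply/negP => /eqP e0; move: (ltn_ord i); rewrite e0 ltnn.
under eq_bigr => k _ do rewrite mulrA.
rewrite -mulr_suml.
have -> : \sum_(k < n) Posz (2 * tnth t k)%N * (k.+1)%:Z = Posz (2 * seq_weight t)%N.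
  rewrite -wsumZ; apply: eq_bigr => k _; ring.
rewrite hq PoszM /=; ring.
Qed.

Close Scope ring_scope.

Lemma E2 n r (E : forall t : n.-tuple nat, inPsi t <-> of_type r t) (t : n.-tuple nat) :
  inPsi_min t <-> minimal_of_type r t.
Proof.
rewrite /inPsi_min /minimal_of_type E; split => -[h1 [h2 h3]]; do 2!split => //;
  move=> [u [v [hu [hu' [hv [hv' huv]]]]]]; apply: h3; exists u, v;
  rewrite ?E in hu hv *; rewrite -?E in hu hv *; by [].
Qed.

Unset Implicit Arguments.
Theorem theorem4p4 (n : nat) (hn : (2 <= n)%N) :
  let r := ((n.+1) %/ gcdn n.+1 2)%N in
  exists (s1 s2 : seq (n.-tuple nat)),
    [/\ uniq s1, (forall t, t \in s1 <-> inPsi_min t),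
        uniq s2, (forall t, t \in s2 <-> minimal_of_type r t)
      & size s1 = size s2].
Proof.
move=> r.
have r0 : (0 < r)%N.
  rewrite /r divn_gt0 ?gcdn_gt0 //; apply: dvdn_leq => //; exact: dvdn_gcdl.
have E : forall t : n.-tuple nat, inPsi t <-> of_type r t.
  by move=> t; rewrite inPsi_dvd // rdiv.
have [s [us hs]] := enum_min (fun t => @min_bound n r t r0).
exists s, s; split => // t; rewrite hs //; exact: (iff_sym (E2 E t)).
Qed.
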